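(* Let $n,d\ge1$, let $\sigma$ be a reflection of $\mathbb{Z}_n^d$ (with specified half-spaces $H^+,H^-$), and let $X$ be a lazy simple random walk on $\mathbb{Z}_n^d$. Then for all $t\ge1$, all $b\in\mathbb{Z}_n^d$ and all sets $D_1,\dots,D_t\subseteq\mathbb{Z}_n^d$, \[ \mathbb{P}\big(X_1\in D_1,\dots,X_t\in D_t\,\big|\,X_0\in\{b\}\big)\le\mathbb{P}\big(X_1\in D_1^\sigma,\dots,X_t\in D_t^\sigma\,\big|\,X_0\in\{b\}^\sigma\big). \]
   Context: $\mathbb{Z}_n^d$ is equipped with the graph distance of the torus (nearest-neighbour graph). A reflection of a metric space $(M,d)$ is an isometry $\sigma:M\to M$ together with a decomposition $M=H^0\sqcup H^+\sqcup H^-$ such that $\sigma^2x=x$ for all $x$, $H^0$ is the set of fixed points of $\sigma$, $\sigma H^+=H^-$, and $d(x,y)<d(x,\sigma y)$ for all $x,y\in H^+$. The two-point rearrangement of a set $A\subseteq M$ is $A^\sigma$ defined by $A^\sigma\cap H^+=(A\cup\sigma A)\cap H^+$, $A^\sigma\cap H^-=(A\cap\sigma A)\cap H^-$, $A^\sigma\cap H^0=A\cap H^0$ (note $\{b\}^\sigma$ is again a singleton). The lazy simple random walk on $\mathbb{Z}_n^d$ stays put with probability $1/2$ and otherwise moves from $x$ to $x\pm e_i$ ($i=1,\dots,d$), each with probability $1/(4d)$. *)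

(* Defs.v *)
From HB Require Import structures.
From mathcomp Require Import all_boot all_order all_algebra.
Set Implicit Arguments. Unset Strict Implicit. Unset Printing Implicit Defensive.
Import Order.TTheory GRing.Theory Num.Theory.

Definition torus (n d : nat) := {ffun 'I_d -> 'I_n}.

Definition tshift n d (x : torus n d) (i : 'I_d) (s : bool) : torus n d :=
  [ffun j => if j == i then (if s then ordS (x j) else ord_pred (x j)) else x j].

Definition tadj n d (x y : torus n d) : bool :=
  [exists i : 'I_d, (y == tshift x i true) || (y == tshift x i false)].

Fixpoint reach n d (k : nat) (x y : torus n d) : bool :=
  if k is k'.+1 then reach k' x y || [exists z, reach k' x z && tadj z y]
  else x == y.

(* Graph distance: the least k such that y is within k steps of x
   (the torus is connected of diameter <= d * n, so the search range
   0 .. d*n suffices). *)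
Definition tdist n d (x y : torus n d) : nat :=
  find (fun k => reach k x y) (iota 0 (d * n).+1).

Definition fixset n d (sigma : torus n d -> torus n d) : {set torus n d} :=
  [set x | sigma x == x].

Definition is_reflection n d (sigma : torus n d -> torus n d)
    (Hp Hm : {set torus n d}) : Prop :=
  [/\ (forall x y, tdist (sigma x) (sigma y) = tdist x y),
      (forall x, sigma (sigma x) = x),
      [/\ [disjoint Hp & Hm], [disjoint fixset sigma & Hp :|: Hm]
        & fixset sigma :|: Hp :|: Hm = setT],
      sigma @: Hp = Hm &
      (forall x y, x \in Hp -> y \in Hp -> tdist x y < tdist x (sigma y))%N].

Definition rearr n d (sigma : torus n d -> torus n d) (Hp Hm : {set torus n d})
    (A : {set torus n d}) : {set torus n d} :=
  (Hp :&: (A :|: sigma @: A)) :|: (Hm :&: (A :&: sigma @: A))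
    :|: (fixset sigma :&: A).

Local Open Scope ring_scope.

Definition lazy_P (R : fieldType) n d (x y : torus n d) : R :=
  (x == y)%:R / 2%:R +
  \sum_(i < d) \sum_(s : bool) (tshift x i s == y)%:R / (4 * d)%:R.

(* P(X_1 \in D_1, ..., X_t \in D_t | X_0 = x) for the Markov chain with
   kernel P, D = [:: D_1; ...; D_t]. *)
Fixpoint path_prob (R : fieldType) (T : finType) (P : T -> T -> R)
    (x : T) (D : seq {set T}) : R :=
  if D is D1 :: D' then \sum_(y in D1) P x y * path_prob P y D' else 1.

(* P(X_1 \in D_1, ..., X_t \in D_t | X_0 \in A), with X_0 uniformly
   distributed on A (only used for singletons A, where it is the
   conditional probability given X_0 = the point of A). *)
Definition cond_prob (R : fieldType) (T : finType) (P : T -> T -> R)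
    (A : {set T}) (D : seq {set T}) : R :=
  (\sum_(a in A) path_prob P a D) / #|A|%:R.

(* Main.v *)
Require Import Defs.
From HB Require Import structures.
From mathcomp Require Import all_boot all_order all_algebra.
From mathcomp Require Import zify ring lra.
Import Order.TTheory GRing.Theory Num.Theory.

Lemma predE n a : (a < n)%N -> ((a + n).-1 %% n = if a == 0 then n.-1 else a.-1)%N.
Proof.
move=> h. case: (posnP a) => [->|ha].
  by rewrite add0n modn_small; lia.
have ->: ((a+n).-1 = a.-1 + n)%N by lia. rewrite modnDr modn_small; last lia.
by [].
Qed.
Lemma succE n a : (a < n)%N -> (a.+1 %% n = if a.+1 == n then 0 else a.+1)%N.
Proof.
move=> h. case: (ltngtP a.+1 n) => h3.
- rewrite modn_small //; lia.
- lia.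
- by rewrite h3 modnn.
Qed.
Lemma pred_succ n a : (2 <= n)%N -> (a < n)%N -> ((a + n).-1 %% n == a.+1 %% n) = (n == 2).
Proof.
move=> h1 h2. rewrite predE // succE //.
case: (a =P 0) => ?; case: (a.+1 =P n) => ?; apply/eqP/eqP; lia.
Qed.
Lemma succ_self n a : (a < n)%N -> (a.+1 %% n == a) = (n == 1).
Proof.
move=> h2. rewrite succE //.
case: (a.+1 =P n) => ?; apply/eqP/eqP; lia.
Qed.
Lemma pred_self n a : (a < n)%N -> ((a+n).-1 %% n == a) = (n == 1).
Proof.
move=> h2. rewrite predE //.
case: (a =P 0) => ?; apply/eqP/eqP; lia.
Qed.

Local Open Scope ring_scope.
Section Torus.
Variables (n d : nat).
Hypotheses (hn : (1 <= n)%N) (hd : (1 <= d)%N).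
Local Notation T := (torus n d).

Definition sh (s : bool) (a : 'I_n) := if s then ordS a else ord_pred a.

Lemma sh_self s a : (sh s a == a) = (n == 1).
Proof. by case: s; rewrite /sh -val_eqE /= ?succ_self ?pred_self. Qed.

Lemma sh_TF a : (2 <= n)%N -> (sh true a == sh false a) = (n == 2).
Proof. by move=> h; rewrite /sh -val_eqE /= eq_sym pred_succ. Qed.

Lemma tshiftE (x : T) i s j : tshift x i s j = if j == i then sh s (x j) else x j.
Proof. by rewrite /tshift ffunE. Qed.

Lemma tshift_selfE (x : T) i s : (tshift x i s == x) = (n == 1).
Proof.
rewrite -(sh_self s (x i)); apply/eqP/eqP => [e|e].
  by have := congr1 (fun f : T => f i) e; rewrite /= tshiftE eqxx.
by apply/ffunP => j; rewrite tshiftE; case: eqP => // ->.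
Qed.

Lemma tshift_eqE (x : T) i s s' : (tshift x i s == tshift x i s') = (sh s (x i) == sh s' (x i)).
Proof.
apply/eqP/eqP => [e|e].
  by have := congr1 (fun f : T => f i) e; rewrite /= !tshiftE eqxx.
by apply/ffunP => j; rewrite !tshiftE; case: eqP => // ->.
Qed.

Lemma tshift_neq (x : T) i j s s' : i != j -> (n != 1) -> (tshift x i s == tshift x j s') = false.
Proof.
move=> hij hn1; apply/negP => /eqP e.
have := congr1 (fun f : T => f i) e; rewrite /= !tshiftE eqxx (negPf hij) => /eqP.
by rewrite sh_self (negPf hn1).
Qed.

Lemma n1_eq : n = 1%N -> forall x y : T, x = y.
Proof.
move=> e x y; apply/ffunP => j; apply/eqP; rewrite -val_eqE /=; apply/eqP.
have hx := ltn_ord (x j); have hy := ltn_ord (y j); lia.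
Qed.

Lemma reach1 (x y : T) : [exists z, (x == z) && tadj z y] = tadj x y.
Proof.
apply/existsP/idP => [[z /andP[/eqP -> //]] | h].
by exists x; rewrite eqxx.
Qed.

Lemma tdistE (x y : T) : exists k,
  tdist x y = if x == y then 0%N else if tadj x y then 1%N else k.+2.
Proof.
rewrite /tdist.
have -> : (d * n).+1 = (d * n).-1.+2 by nia.
rewrite /= reach1.
by case: (x == y) => /=; [exists 0%N | case: (tadj x y) => /=; [exists 0%N | eexists]].
Qed.

Variable R : realFieldType.

Definition E0 : R := 1 / 2%:R + \sum_(i < d) \sum_(s : bool) (n == 1)%:R / (4 * d)%:R.
Definition E1 : R := (1 + (n == 2)%:R) / (4 * d)%:R.

Lemma lazyE (x y : T) :
  lazy_P R x y = if x == y then E0 else if tadj x y then E1 else 0.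
Proof.
rewrite /lazy_P; case: (eqVneq x y) => [<-|hxy].
  rewrite /E0; congr (_ + _); apply: eq_bigr => i _; apply: eq_bigr => s _.
  by rewrite tshift_selfE.
have hn1 : n != 1%N by apply/eqP => e; move: hxy; rewrite (n1_eq e x y) eqxx.
have hn2 : (2 <= n)%N by lia.
rewrite mul0r add0r.
case: (boolP (tadj x y)) => ha.
  move: (ha) => /existsP [i0 /orP h].
  have [s0 ->] : exists s0, y = tshift x i0 s0 by case: h => /eqP ->; [exists true | exists false].
  rewrite (bigD1 i0) //= [X in _ + X]big1 ?addr0; last first.
    by move=> i hi; apply: big1 => s _; rewrite tshift_neq ?mul0r.
  rewrite big_bool /= !tshift_eqE /E1 -mulrDl.
  by case: s0; rewrite eqxx; [rewrite eq_sym|rewrite addrC]; rewrite sh_TF.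
apply: big1 => i _; apply: big1 => s _.
have /negPf -> : tshift x i s != y.
  apply/negP => /eqP e; move/negP: ha; apply; apply/existsP; exists i.
  by rewrite -e; clear e; case: s; rewrite eqxx ?orbT.
by rewrite mul0r.
Qed.


Definition Fd (k : nat) : R := if k == 0%N then E0 else if k == 1%N then E1 else 0.

Lemma lazyFd (x y : T) : lazy_P R x y = Fd (tdist x y).
Proof.
case: (tdistE x y) => k ->; rewrite lazyE /Fd.
by case: (x == y) => //; case: (tadj x y).
Qed.

Lemma E_bounds : 0 <= E1 /\ E1 <= E0.
Proof.
have k4 : (4 : R) <= (4 * d)%:R by rewrite ler_nat; lia.
have c1 : (0 <= ((n == 2)%N)%:R :> R) && (((n == 2)%N)%:R <= 1 :> R) by case: (n == 2)%N; rewrite /= ?ler01 ?lexx.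
have h1 : 1 / 2%:R <= E0.
  rewrite /E0 lerDl; apply: sumr_ge0 => i _; apply: sumr_ge0 => s _.
  by apply: divr_ge0; apply: ler0n.
have kp : 0 < (4 * d)%:R :> R by lra.
split.
  by rewrite /E1; apply: divr_ge0; [apply: addr_ge0; [exact: ler01 | exact: ler0n] | exact: ler0n].
apply: le_trans h1; rewrite /E1 ler_pdivrMr //.
case/andP: c1 => c0 c1; lra.
Qed.

Lemma Fd_ge0 k : 0 <= Fd k.
Proof. case: E_bounds => h1 h2; rewrite /Fd; case: ifP => _; [lra|case: ifP => _ //]. Qed.

Lemma Fd_anti a b : (a < b)%N -> Fd b <= Fd a.
Proof.
case: E_bounds => h1 h2.
rewrite /Fd; case: a => [|[|a]]; case: b => [|[|b]] //= _; lra.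
Qed.

End Torus.


Section Abstract.
Variables (R : realFieldType) (n d : nat).
Local Notation T := (torus n d).
Variables (P : T -> T -> R) (s : T -> T)
  (Hp Hm : {set T}).
Hypothesis hs2 : forall x, s (s x) = x.
Hypothesis hsHp : forall x, x \in Hp -> s x \in Hm.
Hypothesis hsHm : forall x, x \in Hm -> s x \in Hp.
Hypothesis hfixp : forall x, s x = x -> x \notin Hp.
Hypothesis hfixm : forall x, s x = x -> x \notin Hm.
Hypothesis hpart : forall x, [|| s x == x, x \in Hp | x \in Hm].
Hypothesis hdisj : forall x, x \in Hp -> x \notin Hm.
Hypothesis Ps : forall x y, P (s x) (s y) = P x y.
Hypothesis P0 : forall x y, 0 <= P x y.
Hypothesis Pge : forall x y, x \in Hp -> y \in Hp -> P x (s y) <= P x y.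

Let H0 := [set x | s x == x].

Lemma pairsum (F : T -> R) :
  \sum_y F y = \sum_(y in H0) F y + \sum_(y in Hp) (F y + F (s y)).
Proof.
rewrite (bigID (fun y => y \in H0)) /=; congr (_ + _).
rewrite big_split /=.
rewrite (bigID (fun y => y \in Hp)) /=; congr (_ + _).
  apply: eq_bigl => y; rewrite inE; case: (boolP (y \in Hp)) => hy; last by rewrite andbF.
  by rewrite andbT; apply/negP => /eqP /hfixp; rewrite hy.
rewrite (reindex_inj (can_inj hs2)) /=.
apply: eq_bigl => y; rewrite !inE (inj_eq (can_inj hs2)).
case: (boolP (y \in Hp)) => hy.
  have hm := hsHp _ hy.
  apply/andP; split.
    by apply/negP => /eqP h; move: (hfixp _ h); rewrite hy.
  by apply/negP => /hdisj; rewrite hm.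
apply/negP => /andP[hnf hsp].
have := hpart (s y); rewrite hs2 (negPf hsp) /= => /orP[/eqP e|hm].
  by rewrite -e eqxx in hnf.
by move: (hsHm _ hm); rewrite hs2 (negPf hy).
Qed.

Lemma mem_simg (A : {set T}) x : (x \in s @: A) = (s x \in A).
Proof.
apply/imsetP/idP => [[z zA ->]|h]; first by rewrite hs2.
by exists (s x); rewrite ?hs2.
Qed.

Lemma mem_rearr x (A : {set T}) : x \in rearr s Hp Hm A =
  if x \in Hp then (x \in A) || (s x \in A)
  else if x \in Hm then (x \in A) && (s x \in A) else x \in A.
Proof.
rewrite /rearr !inE !mem_simg.
case: (boolP (x \in Hp)) => hp.
  rewrite (negPf (hdisj _ hp)).
  have -> : (s x == x) = false by apply/negP => /eqP /hfixp; rewrite hp.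
  by case: (x \in A); case: (s x \in A).
case: (boolP (x \in Hm)) => hm.
  have -> : (s x == x) = false by apply/negP => /eqP /hfixm; rewrite hm.
  by case: (x \in A); case: (s x \in A).
have := hpart x; rewrite (negPf hp) (negPf hm) !orbF => ->.
by case: (x \in A); case: (s x \in A).
Qed.

Definition inv (g G : T -> R) :=
  [/\ forall x, 0 <= g x, forall x, s x = x -> g x <= G x &
      forall x, x \in Hp -> [/\ g x <= G x, g (s x) <= G x & g x + g (s x) <= G x + G (s x)]].

Lemma term1 (p q a b A B : R) : q <= p -> 0 <= q -> a <= A -> b <= A -> a + b <= A + B ->
  p * a + q * b <= p * A + q * B.
Proof.
move=> h1 h2 h3 h4 h5.
have e : p * A + q * B - (p * a + q * b) = q * (A + B - (a + b)) + (p - q) * (A - a) by ring.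
rewrite -subr_ge0 e; apply: addr_ge0; apply: mulr_ge0; lra.
Qed.

Lemma term2 (p q a b A B : R) : q <= p -> 0 <= q -> a <= A -> b <= A -> a + b <= A + B ->
  q * a + p * b <= p * A + q * B.
Proof.
move=> h1 h2 h3 h4 h5.
have e : p * A + q * B - (q * a + p * b) = q * (A + B - (a + b)) + (p - q) * (A - b) by ring.
rewrite -subr_ge0 e; apply: addr_ge0; apply: mulr_ge0; lra.
Qed.

Lemma term3 (p q a b A B : R) : 0 <= p -> 0 <= q -> a + b <= A + B ->
  p * a + q * b + (q * a + p * b) <= p * A + q * B + (q * A + p * B).
Proof.
move=> h1 h2 h5.
have e : p * A + q * B + (q * A + p * B) - (p * a + q * b + (q * a + p * b))
   = (p + q) * (A + B - (a + b)) by ring.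
rewrite -subr_ge0 e; apply: mulr_ge0; lra.
Qed.

Lemma step (h H : T -> R) :
  (forall y, 0 <= h y) -> (forall y, s y = y -> h y <= H y) ->
  (forall y, y \in Hp -> [/\ h y <= H y, h (s y) <= H y & h y + h (s y) <= H y + H (s y)]) ->
  inv (fun x => \sum_y P x y * h y) (fun x => \sum_y P x y * H y).
Proof.
move=> hh0 hh1 hh2; split.
- by move=> x; apply: sumr_ge0 => y _; apply: mulr_ge0.
- move=> x hx; rewrite !pairsum; apply: lerD.
    apply: ler_sum => y; rewrite inE => /eqP hy; apply: ler_wpM2l => //; exact: hh1.
  apply: ler_sum => y hy.
  have -> : P x (s y) = P x y by rewrite -{1}hx Ps.
  rewrite -!mulrDr; apply: ler_wpM2l => //; by case: (hh2 y hy).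
- move=> x hx; split.
  + rewrite !pairsum; apply: lerD.
      apply: ler_sum => y; rewrite inE => /eqP hy; apply: ler_wpM2l => //; exact: hh1.
    apply: ler_sum => y hy; case: (hh2 y hy) => h1 h2 h3.
    by apply: term1 => //; apply: Pge.
  + rewrite !pairsum; apply: lerD.
      apply: ler_sum => y; rewrite inE => /eqP hy.
      rewrite -{1}hy Ps; apply: ler_wpM2l => //; exact: hh1.
    apply: ler_sum => y hy; case: (hh2 y hy) => h1 h2 h3.
    rewrite Ps -{1}(hs2 y) Ps.
    by apply: term2 => //; apply: Pge.
  + rewrite !pairsum addrACA [X in _ <= X]addrACA; apply: lerD.
      rewrite -!big_split /=; apply: ler_sum => y; rewrite inE => /eqP hy.
      by apply: lerD; apply: ler_wpM2l => //; apply: hh1.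
    rewrite -!big_split /=; apply: ler_sum => y hy; case: (hh2 y hy) => h1 h2 h3.
    have e1 : P (s x) y = P x (s y) by rewrite -Ps hs2.
    rewrite e1 Ps; exact: term3.
Qed.

Lemma path_probE x (D1 : {set T}) D' :
  path_prob P x (D1 :: D') = \sum_y P x y * ((y \in D1)%:R * path_prob P y D').
Proof.
rewrite /= big_mkcond /=; apply: eq_bigr => y _.
by case: (y \in D1); rewrite ?mul1r ?mul0r ?mulr0.
Qed.

Lemma path_prob_ge0 x D : 0 <= path_prob P x D.
Proof.
elim: D x => [|D1 D' IH] x /=; first exact: ler01.
by apply: sumr_ge0 => y _; apply: mulr_ge0.
Qed.

Lemma inv_ext g g' G G' : (forall x, g x = g' x) -> (forall x, G x = G' x) ->
  inv g G -> inv g' G'.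
Proof.
move=> eg eG [h0 h1 h2]; split.
- by move=> x; rewrite -eg.
- by move=> x hx; rewrite -eg -eG; apply: h1.
- by move=> x hx; rewrite -!eg -!eG; apply: h2.
Qed.

Lemma main_inv D : inv (fun x => path_prob P x D)
  (fun x => path_prob P x [seq rearr s Hp Hm Di | Di <- D]).
Proof.
elim: D => [|D1 D' [IH0 IH1 IH2]] /=.
  by split=> [x|x _|x _] /=; [exact: ler01 | exact: lexx | split; exact: lexx].
set g := fun x => path_prob P x D'.
set G := fun x => path_prob P x [seq rearr s Hp Hm Di | Di <- D'].
apply: (@inv_ext _ _ _ _ _ _ (@step (fun y => (y \in D1)%:R * g y)
  (fun y => (y \in rearr s Hp Hm D1)%:R * G y) _ _ _)).
- by move=> x; rewrite -path_probE.
- by move=> x; rewrite -path_probE.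
- by move=> y; apply: mulr_ge0; [exact: ler0n | exact: path_prob_ge0].
- move=> y hy /=.
  have hp : (y \in Hp) = false by apply/negbTE/hfixp.
  have hm : (y \in Hm) = false by apply/negbTE/hfixm.
  rewrite mem_rearr hp hm; apply: ler_wpM2l; first exact: ler0n.
  exact: IH1.
- move=> y hy /=.
  have hsp : (s y \in Hp) = false by apply/negP => /hdisj; rewrite hsHp.
  rewrite !mem_rearr hy hsp hsHp // hs2.
  have := IH0 y; have := IH0 (s y); case: (IH2 y hy).
  rewrite -/(g y) -/(g (s y)) -/(G y) -/(G (s y)).
  move: (g y) (g (s y)) (G y) (G (s y)) => a b A B.
  by case: (y \in D1); case: (s y \in D1); rewrite /= ?mul1r ?mul0r => h1 h2 h3 h4 h5; split; lra.
Qed.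

Lemma final b D : cond_prob P [set b] D <=
  cond_prob P (rearr s Hp Hm [set b]) [seq rearr s Hp Hm Di | Di <- D].
Proof.
set b' := if b \in Hm then s b else b.
have hb : rearr s Hp Hm [set b] = [set b'].
  apply/setP => x; rewrite in_set1; apply/idP/eqP => [|->].
  - rewrite mem_rearr !inE.
    case: (boolP (x \in Hp)) => hx.
      case/orP => /eqP e.
        by rewrite /b' -e (negPf (hdisj _ hx)).
      by rewrite /b' -e hsHp // hs2.
    case: (boolP (x \in Hm)) => hm.
      case/andP => /eqP e1 /eqP e2.
      have e3 : s x = x by rewrite e2 e1.
      by move: (hfixm _ e3); rewrite hm.
    by move=> /eqP e; rewrite /b' -e (negPf hm).
  - rewrite mem_rearr !inE /b'.
    case: (boolP (b \in Hm)) => hm.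
      by rewrite hsHm // hs2 eqxx orbT.
    case: (boolP (b \in Hp)) => hp; first by rewrite eqxx.
    by rewrite (negPf hm) eqxx.
rewrite hb /cond_prob !big_set1 !cards1 !divr1.
case: (main_inv D) => h0 h1 h2.
rewrite /b'; case: (boolP (b \in Hm)) => hm.
  by case: (h2 (s b) (hsHm _ hm)); rewrite hs2.
case: (boolP (b \in Hp)) => hp; first by case: (h2 b hp).
apply: h1; have := hpart b; rewrite (negPf hp) (negPf hm) !orbF; exact/eqP.
Qed.
End Abstract.


Theorem lemma3p2 (R : realFieldType) (n d : nat) (hn : (1 <= n)%N) (hd : (1 <= d)%N)
    (sigma : torus n d -> torus n d) (Hp Hm : {set torus n d})
    (hsigma : is_reflection sigma Hp Hm)
    (t : nat) (ht : (1 <= t)%N) (b : torus n d) (D : t.-tuple {set torus n d}) :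
  cond_prob (@lazy_P R n d) [set b] D
  <= cond_prob (@lazy_P R n d) (rearr sigma Hp Hm [set b])
       [seq rearr sigma Hp Hm Di | Di <- D].
Proof.
case: hsigma => hiso hs2 [hdj1 hdj0 hcov] himg hlt.
have hsHp : forall x, x \in Hp -> sigma x \in Hm.
  by move=> x hx; rewrite -himg; apply: imset_f.
have hsHm : forall x, x \in Hm -> sigma x \in Hp.
  by move=> x; rewrite -himg => /imsetP [z hz ->]; rewrite hs2.
have hfix : forall x, sigma x = x -> x \in Hp :|: Hm = false.
  by move=> x hx; apply: (disjointFr hdj0); rewrite inE hx.
have hfixp : forall x, sigma x = x -> x \notin Hp.
  by move=> x /hfix /negbT; rewrite inE => /norP [].
have hfixm : forall x, sigma x = x -> x \notin Hm.
  by move=> x /hfix /negbT; rewrite inE => /norP [].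
have hpart : forall x, [|| sigma x == x, x \in Hp | x \in Hm].
  by move=> x; have := in_setT x; rewrite -hcov !inE -orbA.
have hdisj : forall x, x \in Hp -> x \notin Hm.
  by move=> x hx; rewrite (disjointFr hdj1 hx).
apply: (@final R n d (@lazy_P R n d) sigma Hp Hm) => //.
- by move=> x y; rewrite !(@lazyFd n d hn hd R) hiso.
- by move=> x y; rewrite (@lazyFd n d hn hd R); exact: (@Fd_ge0 n d hn hd R).
- move=> x y hx hy; rewrite !(@lazyFd n d hn hd R); apply: (@Fd_anti n d hn hd R); exact: hlt.
Qed.
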